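(* Let $k\ge1$, let $\mathcal{H}$ be a separable infinite-dimensional complex Hilbert space with orthonormal basis $\{e_n\}_{n\ge0}$, and let $\alpha_0,\dots,\alpha_k\in\mathbb{C}$ with $\sum_{i=0}^k|\alpha_i|^2<1$. Let $T$ be the operator on $\mathcal{H}$ given by $Te_0=\alpha_0e_0+\alpha_1e_1+\cdots+\alpha_ke_k$ and $Te_n=e_{n+k}$ for $n\ge1$ (so $T$ is a completely non-unitary contraction with $\dim\mathcal{D}_T=1$, $\mathcal{D}_T\subseteq\mathcal{D}_{T^*}$, $\dim\mathcal{D}_{T^*}<\infty$). Then $T$ is analytic if and only if either $\alpha_0=0$ or $\alpha_j\neq0$ for some $1\le j\le k$.
   Context: For a contraction $T$ on $\mathcal{H}$, $\mathcal{D}_T=\overline{(I-T^*T)^{1/2}\mathcal{H}}$ and $\mathcal{D}_{T^*}=\overline{(I-TT^* )^{1/2}\mathcal{H}}$. A contraction is completely non-unitary if it has no nonzero reducing subspace on which it is unitary. $T$ is analytic if $\bigcap_{m\ge1}T^m\mathcal{H}=\{0\}$. *)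

(* Defs.v *)
From Stdlib Require Import Reals Arith.
From Coquelicot Require Import Coquelicot.
Open Scope R_scope.

(* The model Hilbert space: l^2(N, C), with orthonormal basis e_n = delta_n.
   Every separable infinite-dimensional complex Hilbert space with an
   orthonormal basis (e_n) is unitarily identified with l^2 via e_n |-> delta_n. *)
Definition l2 (x : nat -> C) : Prop := ex_series (fun n => (Cmod (x n)) ^ 2).

(* The operator T with T e_0 = alpha_0 e_0 + ... + alpha_k e_k and
   T e_n = e_{n+k} for n >= 1, extended by linearity and continuity:
   for x = sum_n x_n e_n,  (T x)_j = alpha_j x_0  for j <= k,
                           (T x)_j = x_{j-k}      for j > k. *)
Definition Top (k : nat) (alpha : nat -> C) (x : nat -> C) : nat -> C :=
  fun j => if Nat.leb j k then Cmult (alpha j) (x 0%nat) else x (j - k)%nat.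

Definition in_range_pow (T : (nat -> C) -> (nat -> C)) (m : nat) (x : nat -> C) : Prop :=
  exists y, l2 y /\ Nat.iter m T y = x.

Definition analytic (T : (nat -> C) -> (nat -> C)) : Prop :=
  forall x : nat -> C, l2 x ->
    (forall m : nat, (1 <= m)%nat -> in_range_pow T m x) ->
    forall n, x n = 0%C.

(* Main.v *)
Require Import Defs.
From Stdlib Require Import Reals Arith.
From Coquelicot Require Import Coquelicot.
From Stdlib Require Import Lia Lra Classical FunctionalExtensionality.
Open Scope R_scope.
Implicit Types (a : nat -> C) (z y : nat -> C) (c : C).

Lemma T_0 k a z : Top k a z 0%nat = Cmult (a 0%nat) (z 0%nat).
Proof. reflexivity. Qed.

Lemma T_low k a z j : (1 <= j <= k)%nat -> Top k a z j = Cmult (a j) (z 0%nat).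
Proof. intros H. unfold Top. replace (Nat.leb j k) with true; auto.
  symmetry; apply Nat.leb_le; lia. Qed.

Lemma T_high k a z n : (1 <= n)%nat -> Top k a z (n + k)%nat = z n.
Proof. intros H. unfold Top. replace (Nat.leb (n+k) k) with false.
  f_equal; lia. symmetry; apply Nat.leb_gt; lia. Qed.

Lemma shift k a p z n : (1 <= n)%nat ->
  Nat.iter p (Top k a) z (n + p * k)%nat = z n.
Proof. intros Hn. induction p as [|p IH]; simpl.
  - f_equal; lia.
  - replace (n + (k + p * k))%nat with ((n + p*k) + k)%nat by lia.
    rewrite T_high by lia. exact IH. Qed.

Lemma key k a z q r : (1 <= r <= k)%nat ->
  Nat.iter (S q) (Top k a) z (r + q * k)%nat = Cmult (a r) (z 0%nat).
Proof. intros Hr. rewrite <- Nat.add_1_r, Nat.iter_add. rewrite shift by lia.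
  simpl. apply T_low; auto. Qed.

Fixpoint cp (c : C) (m : nat) : C := match m with O => 1%C | S m => Cmult c (cp c m) end.

Lemma iter0 k a m z : Nat.iter m (Top k a) z 0%nat = Cmult (cp (a 0%nat) m) (z 0%nat).
Proof. induction m; simpl. ring. rewrite T_0, IHm. ring. Qed.

Lemma cmod_cp (c : C) m : Cmod (cp c m) = Cmod c ^ m.
Proof. induction m; simpl. apply Cmod_1. rewrite Cmod_mult, IHm. ring. Qed.

Lemma cp_nz (c : C) m : c <> 0%C -> cp c m <> 0%C.
Proof. intros Hc. induction m; simpl. 
  - intro H. apply C1_nz. exact H.
  - intro H. apply (f_equal Cmod) in H. rewrite Cmod_mult, Cmod_0 in H.
    assert (0 < Cmod c) by (apply Cmod_gt_0; exact Hc). assert (0 < Cmod (cp c m)) by (apply Cmod_gt_0; auto).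
    nra. Qed.

Lemma decomp k n : (1 <= k)%nat -> (1 <= n)%nat ->
  exists q r, (1 <= r <= k)%nat /\ n = (r + q * k)%nat.
Proof. intros Hk Hn. exists ((n-1)/k)%nat, ((n-1) mod k + 1)%nat.
  assert (Hm := Nat.mod_upper_bound (n-1) k ltac:(lia)).
  assert (Hd := Nat.div_mod_eq (n-1) k). split. lia. nia. Qed.

Definition e0 (c : C) : nat -> C := fun n => match n with O => c | _ => 0%C end.

Lemma T_e0 k a c : (forall j, (1 <= j <= k)%nat -> a j = 0%C) ->
  Top k a (e0 c) = e0 (Cmult (a 0%nat) c).
Proof. intros Ha. apply functional_extensionality. intros [|j].
  reflexivity. destruct (le_lt_dec (S j) k).
  - rewrite T_low by lia. rewrite Ha by lia. simpl. ring.
  - unfold Top. replace (Nat.leb (S j) k) with false by (symmetry; apply Nat.leb_gt; lia).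
    unfold e0. destruct (S j - k)%nat eqn:E; [lia|reflexivity]. Qed.

Lemma l2_e0 (c : C) : l2 (e0 c).
Proof. unfold l2. apply (@ex_series_le R_AbsRing R_CompleteNormedModule _ (fun n => Cmod c ^ 2 * (1/2) ^ n)).
  - intros [|n]; simpl; rewrite Rabs_pos_eq.
    + lra.
    + apply pow2_ge_0.
    + rewrite Cmod_0. assert (0 <= Cmod c * (Cmod c * 1)) by (rewrite Rmult_1_r; apply Rle_0_sqr).
      assert (0 <= (1/2)^n) by (apply pow_le; lra).
      replace (0 * (0 * 1)) with 0 by ring. assert (0 <= 1/2 * (1/2)^n) by nra. nra.
    + rewrite Cmod_0. lra.
  - apply (ex_series_scal_l (V := R_NormedModule)). apply ex_series_geom. rewrite Rabs_pos_eq; lra.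
Qed.

Theorem corollary4p6 (k : nat) (alpha : nat -> C) :
  (1 <= k)%nat ->
  sum_f_R0 (fun i => (Cmod (alpha i)) ^ 2) k < 1 ->
  (analytic (Top k alpha) <->
   (alpha 0%nat = 0%C \/ exists j : nat, (1 <= j <= k)%nat /\ alpha j <> 0%C)).
Proof.
  intros Hk Hsum. split.
  - intros Han. apply NNPP. intros Hn.
    assert (H0 : alpha 0%nat <> 0%C) by tauto.
    assert (Hj : forall j, (1 <= j <= k)%nat -> alpha j = 0%C).
    { intros j Hj. apply NNPP. intro. apply Hn. right. eauto. }
    assert (Hit : forall m c, Nat.iter m (Top k alpha) (e0 c) = e0 (Cmult (cp (alpha 0%nat) m) c)).
    { induction m; intros c; simpl. f_equal; ring. rewrite IHm, T_e0 by auto. f_equal; ring. }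
    assert (E := Han (e0 1%C) (l2_e0 _)).
    assert (e0 1%C 0%nat = 0%C). { apply (E ltac:(intros m _; exists (e0 (Cinv (cp (alpha 0%nat) m)));
      split; [apply l2_e0| rewrite Hit, Cinv_r; [reflexivity|apply cp_nz; auto]]) 0%nat). }
    apply C1_nz; auto.
  - intros Hc x Hx Hr.
    assert (Hx0 : x 0%nat = 0%C).
    { destruct (classic (alpha 0%nat = 0%C)) as [Ha0|Ha0].
      - destruct (Hr 1%nat (le_n _)) as [y [_ Hy]]. rewrite <- Hy. simpl. rewrite T_0, Ha0. ring.
      - destruct Hc as [Hc|[j [Hj Haj]]]; [contradiction|].
        apply NNPP; intros Hx0.
        set (c := Cmod (alpha j) * Cmod (x 0%nat)).
        assert (Hcpos : 0 < c). { unfold c. apply Rmult_lt_0_compat; apply Cmod_gt_0; auto. }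
        assert (Ha0le : Cmod (alpha 0%nat) <= 1).
        { assert (Hs : Cmod (alpha 0%nat) ^ 2 <= sum_f_R0 (fun i => Cmod (alpha i) ^ 2) k).
          { clear. induction k. simpl; lra. cbn [sum_f_R0]. assert (H := pow2_ge_0 (Cmod (alpha (S k)))). lra. }
          assert (0 <= Cmod (alpha 0%nat)) by apply Cmod_ge_0. nra. }
        assert (Hbig : forall q, c <= Cmod (x (j + q * k)%nat)).
        { intros q. destruct (Hr (S q) ltac:(lia)) as [y [_ Hy]].
          assert (E1 : x (j + q*k)%nat = Cmult (alpha j) (y 0%nat)) by (rewrite <- Hy; apply key; auto).
          assert (E2 : x 0%nat = Cmult (cp (alpha 0%nat) (S q)) (y 0%nat)) by (rewrite <- Hy; apply iter0).
          assert (E3 : Cmult (cp (alpha 0%nat) (S q)) (x (j + q*k)%nat) = Cmult (alpha j) (x 0%nat))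
            by (rewrite E1, E2; ring).
          apply (f_equal Cmod) in E3. rewrite !Cmod_mult, cmod_cp in E3.
          unfold c. rewrite <- E3.
          assert (Cmod (alpha 0%nat) ^ S q <= 1) by (rewrite <- (pow1 (S q)); apply pow_incr; split; [apply Cmod_ge_0|exact Ha0le]).
          assert (0 <= Cmod (alpha 0%nat) ^ S q) by (apply pow_le; apply Cmod_ge_0).
          assert (0 <= Cmod (x (j + q * k)%nat)) by apply Cmod_ge_0. nra. }
        assert (Hl := ex_series_lim_0 _ Hx). apply is_lim_seq_spec in Hl.
        destruct (Hl (mkposreal (c*c) ltac:(nra))) as [N HN].
        assert (HN' := HN (j + N * k)%nat ltac:(nia)). simpl in HN'.
        assert (Hb := Hbig N). rewrite Rminus_0_r, Rabs_pos_eq in HN' by apply pow2_ge_0.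
        simpl in HN'. nra. }
    intros [|n]; auto.
    destruct (decomp k (S n) Hk ltac:(lia)) as [q [r [Hrk En]]].
    destruct (Hr (S (S q)) ltac:(lia)) as [y [_ Hy]].
    rewrite En, <- Hy. rewrite <- (Nat.add_1_r (S q)), Nat.iter_add, key by auto.
    simpl. rewrite T_0.
    assert (E := iter0 k alpha (S (S q)) y). rewrite Hy, Hx0 in E.
    destruct (classic (alpha 0%nat = 0%C)) as [Ha0|Ha0].
    + rewrite Ha0. ring.
    + assert (Hy0 : y 0%nat = 0%C).
      { apply (f_equal Cmod) in E. rewrite Cmod_mult, Cmod_0 in E.
        assert (0 < Cmod (cp (alpha 0%nat) (S (S q)))) by (apply Cmod_gt_0, cp_nz; auto).
        apply Cmod_eq_0. assert (0 <= Cmod (y 0%nat)) by apply Cmod_ge_0. nra. }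
      rewrite Hy0. ring.
Qed.
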